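(* For every $\nu,c>0$, the function $$z\mapsto\frac{\left(H_{-\nu-c}(z)\right)^2}{H_{-\nu}(z)\,H_{-\nu-2c}(z)}$$ is decreasing on $\mathbb{R}$.
   Context: For $\nu>0$ and $z\in\mathbb{R}$, $H_{-\nu}(z)=\frac{1}{\Gamma(\nu)}\int_0^\infty e^{-t^2-2tz}t^{\nu-1}\,dt$ (Hermite function; equivalently $H_{-\nu}(z)=2^{-\nu/2}e^{z^2/2}D_{-\nu}(\sqrt2 z)$ with $D$ the parabolic cylinder function). *)

(* Defs.v *)
From Stdlib Require Import Reals.
From Coquelicot Require Import Coquelicot.
Open Scope R_scope.

Definition Gamma_fn (nu : R) : R :=
  RInt_gen (fun t : R => exp (- t) * Rpower t (nu - 1))
           (at_right 0) (Rbar_locally p_infty).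

Definition hermite_neg (nu z : R) : R :=
  / Gamma_fn nu *
  RInt_gen (fun t : R => exp (- t ^ 2 - 2 * t * z) * Rpower t (nu - 1))
           (at_right 0) (Rbar_locally p_infty).

(* Main.v *)
Require Import Defs.
From Stdlib Require Import Reals Lra Lia Psatz.
From Coquelicot Require Import Coquelicot.
Open Scope R_scope.


Lemma ball_R (x e y : R) : ball x e y <-> Rabs (y - x) < e.
Proof. unfold ball; simpl; unfold AbsRing_ball, abs, minus, plus, opp; simpl. tauto. Qed.

Lemma gen_of_lim (h : R -> R) (Fa Fb : (R -> Prop) -> Prop) {FFa : Filter Fa} {FFb : Filter Fb}
  (V : R * R -> R) l :
  filter_prod Fa Fb (fun ab => is_RInt h (fst ab) (snd ab) (V ab)) ->
  filterlim V (filter_prod Fa Fb) (locally l) ->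
  is_RInt_gen h Fa Fb l.
Proof.
  intros H1 H2 P HP. unfold filtermapi.
  assert (H3 : filter_prod Fa Fb (fun ab => P (V ab))) by exact (H2 P HP).
  eapply filter_imp; [|exact (filter_and _ _ H1 H3)].
  simpl. intros ab [Hi HPV]. exists (V ab). exact (conj Hi HPV).
Qed.

Lemma cont_Rpower b t : 0 < t -> continuous (fun x => Rpower x b) t.
Proof.
  intros Ht. apply (ex_derive_continuous (K:=R_AbsRing) (V:=R_NormedModule)). unfold Rpower. auto_derive. lra.
Qed.

Lemma is_RInt_Rpower a x y : 0 < a -> 0 < x <= y ->
  is_RInt (fun t => Rpower t (a-1)) x y ((Rpower y a - Rpower x a)/a).
Proof.
  intros Ha Hxy.
  replace ((Rpower y a - Rpower x a)/a) with (minus ((fun t => Rpower t a / a) y) ((fun t => Rpower t a / a) x)).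
  2:{ unfold minus, plus, opp; simpl. field. lra. }
  apply (is_RInt_derive (V:=R_CompleteNormedModule) (fun t => Rpower t a / a)).
  - intros t Ht. rewrite Rmin_left in Ht by lra. rewrite Rmax_right in Ht by lra.
    replace (Rpower t (a-1)) with ((a * Rpower t (a-1)) / a) by (field; lra).
    apply is_derive_Reals.
    apply (derivable_pt_lim_ext (fun t => / a * Rpower t a)). { intros; simpl; field; lra. }
    replace (a * Rpower t (a-1) / a) with (/ a * (a * Rpower t (a-1))) by (field; lra).
    apply derivable_pt_lim_scal. apply derivable_pt_lim_power. lra.
  - intros t Ht. rewrite Rmin_left in Ht by lra. rewrite Rmax_right in Ht by lra.
    apply cont_Rpower; lra.
Qed.

Definition good (a : R) (h : R -> R) :=
  0 < a /\ (forall t, 0 < t -> continuous h t) /\ (forall t, 0 < t -> 0 < h t) /\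
  (exists A, 0 < A /\ forall t, 0 < t <= 1 -> h t <= A * Rpower t (a-1)) /\
  (exists C, 0 < C /\ forall t, 1 <= t -> h t <= C * exp (-t/2)).

Lemma ex_RInt_pos (h : R -> R) x y : (forall t, 0 < t -> continuous h t) -> 0 < x -> 0 < y ->
  ex_RInt h x y.
Proof.
  intros Hc Hx Hy. apply (ex_RInt_continuous (V:=R_CompleteNormedModule)).
  intros z Hz. apply Hc. assert (0 < Rmin x y) by (apply Rmin_glb_lt; lra). lra.
Qed.

Lemma RInt_bound (h G : R -> R) x y I : 0 < x -> x <= y ->
  (forall t, 0 < t -> continuous h t) ->
  (forall t, x <= t <= y -> 0 <= h t <= G t) -> is_RInt G x y I ->
  0 <= RInt h x y <= I.
Proof.
  intros Hx Hxy Hc Hb HG.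
  assert (Hh : ex_RInt h x y) by (apply ex_RInt_pos; auto; lra).
  split.
  - apply RInt_ge_0; auto. intros t Ht. apply Hb; lra.
  - rewrite <- (is_RInt_unique G x y I HG).
    apply RInt_le; auto. exists I; auto. intros t Ht; apply Hb; lra.
Qed.

Lemma is_RInt_exp2 C x y : is_RInt (fun t => C * exp (-t/2)) x y (2*C*(exp(-x/2) - exp(-y/2))).
Proof.
  replace (2*C*(exp(-x/2) - exp(-y/2))) with
    (minus ((fun t => -2*C*exp(-t/2)) y) ((fun t => -2*C*exp(-t/2)) x)).
  2:{ unfold minus, plus, opp; simpl. ring. }
  apply (is_RInt_derive (V:=R_CompleteNormedModule) (fun t => -2*C*exp(-t/2))).
  - intros t _. auto_derive; auto. unfold Rdiv; field.
  - intros t _. apply (ex_derive_continuous (K:=R_AbsRing) (V:=R_NormedModule)). auto_derive. auto.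
Qed.

Lemma Rpower_small a k : 0 < a -> 0 < k -> exists d, 0 < d <= 1 /\ Rpower d a <= k.
Proof.
  intros Ha Hk. exists (Rmin 1 (exp (ln k / a))). split.
  - split. apply Rmin_glb_lt; [lra| apply exp_pos]. apply Rmin_l.
  - apply Rle_trans with (Rpower (exp (ln k / a)) a).
    + apply Rle_Rpower_l. lra. split. apply Rmin_glb_lt; [lra| apply exp_pos]. apply Rmin_r.
    + unfold Rpower. rewrite ln_exp. replace (a * (ln k / a)) with (ln k) by (field; lra).
      rewrite exp_ln; lra.
Qed.

Lemma Rpower_pos x y : 0 < Rpower x y.
Proof. unfold Rpower. apply exp_pos. Qed.

Lemma good_left a h : good a h -> exists l, 0 < l /\ is_RInt_gen h (at_right 0) (at_point 1) l.
Proof.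
  intros (Ha & Hc & Hp & (A & HA & HAb) & _).
  set (V := fun ab : R * R => RInt h (fst ab) (snd ab)).
  assert (Hloc : forall x y, 0 < x <= y -> y <= 1 ->
     0 <= RInt h x y <= A * ((Rpower y a - Rpower x a)/a)).
  { intros x y Hxy Hy1. apply RInt_bound with (G := fun t => A * Rpower t (a-1)); try lra; auto.
    - intros t Ht. split. left; apply Hp; lra. apply HAb; lra.
    - apply (is_RInt_scal (V:=R_NormedModule) (fun t => Rpower t (a-1)) x y A).
      apply is_RInt_Rpower; lra. }
  assert (Hcau : exists l, filterlim V (filter_prod (at_right 0) (at_point 1)) (locally l)).
  { apply filterlim_locally_cauchy. intros eps.
    destruct (Rpower_small a (eps * a / (2 * A))) as [d [Hd Hda]]; auto.
    { apply Rdiv_lt_0_compat. apply Rmult_lt_0_compat; [apply cond_pos|lra]. lra. }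
    exists (fun ab => 0 < fst ab < d /\ snd ab = 1). split.
    - apply (Filter_prod _ _ _ (fun x => 0 < x < d) (fun y => y = 1)).
      + unfold at_right, within, locally. exists (mkposreal d (proj1 Hd)).
        intros y Hy Hy0. apply ball_R in Hy. split; auto.
        apply Rabs_def2 in Hy. unfold minus, plus, opp in Hy; simpl in Hy. lra.
      + reflexivity.
      + intros x y Hx Hy; simpl; auto.
    - intros [u1 u2] [v1 v2] [Hu Hu2] [Hv Hv2]; simpl in *; subst.
      apply ball_R. unfold V; simpl.
      assert (Hch : RInt h u1 v1 + RInt h v1 1 = RInt h u1 1).
      { apply (RInt_Chasles (V:=R_CompleteNormedModule)); apply ex_RInt_pos; auto; lra. }
      assert (Hk : forall x y, 0 < x <= y -> y < d -> Rabs (RInt h x y) < eps).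
      { intros x y Hxy Hyd. destruct (Hloc x y Hxy) as [H1 H2]; [lra|].
        rewrite Rabs_pos_eq by auto.
        assert (Rpower y a <= Rpower d a). { apply Rle_Rpower_l; lra. }
        assert (0 < Rpower x a) by apply Rpower_pos.
        assert (A * ((Rpower y a - Rpower x a) / a) <= eps / 2).
        { apply Rle_trans with (A * (Rpower y a / a)).
          - apply Rmult_le_compat_l; [lra|]. unfold Rdiv. apply Rmult_le_compat_r.
            left; apply Rinv_0_lt_compat; lra. lra.
          - apply Rle_trans with (A * ((eps * a / (2 * A)) / a)).
            + apply Rmult_le_compat_l; [lra|]. unfold Rdiv. apply Rmult_le_compat_r.
              left; apply Rinv_0_lt_compat; lra. lra.
            + right. field. lra. }
        assert (0 < eps) by apply cond_pos. lra. }
      destruct (Rle_lt_dec u1 v1) as [Huv|Huv].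
      + replace (RInt h v1 1 - RInt h u1 1) with (- RInt h u1 v1) by lra.
        rewrite Rabs_Ropp. apply Hk; lra.
      + assert (Hsw : opp (RInt h v1 u1) = RInt h u1 v1).
        { apply (opp_RInt_swap (V:=R_CompleteNormedModule)). apply ex_RInt_pos; auto; lra. }
        unfold opp in Hsw; simpl in Hsw.
        replace (RInt h v1 1 - RInt h u1 1) with (RInt h v1 u1) by lra.
        apply Hk; lra. }
  destruct Hcau as [l Hl]. exists l. split.
  - assert (H0 : 0 < RInt h (1/2) 1).
    { apply RInt_gt_0. lra. intros; apply Hp; lra. intros; apply Hc; lra. }
    apply Rlt_le_trans with (RInt h (1/2) 1); auto.
    assert (HF : Rbar_le (RInt h (1/2) 1) l).
    { apply (filterlim_le (F := filter_prod (at_right 0) (at_point 1))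
               (fun _ => RInt h (1/2) 1) V).
      - apply (Filter_prod _ _ _ (fun x => 0 < x < 1/2) (fun y => y = 1)).
        + unfold at_right, within, locally. exists (mkposreal (1/2) ltac:(lra)).
          intros y Hy Hy0. apply ball_R in Hy. split; auto.
          apply Rabs_def2 in Hy. unfold minus, plus, opp in Hy; simpl in Hy. lra.
        + reflexivity.
        + intros x y Hx Hy; simpl; subst. unfold V; simpl.
          assert (Hch : RInt h x (1/2) + RInt h (1/2) 1 = RInt h x 1).
          { apply (RInt_Chasles (V:=R_CompleteNormedModule)); apply ex_RInt_pos; auto; lra. }
          assert (0 <= RInt h x (1/2)).
          { apply RInt_ge_0. lra. apply ex_RInt_pos; auto; lra. intros; left; apply Hp; lra. }
          lra.
      - apply filterlim_const.
      - exact Hl. }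
    exact HF.
  - apply (gen_of_lim h _ _ V l); auto.
    apply (Filter_prod _ _ _ (fun x => 0 < x) (fun y => y = 1)).
    + unfold at_right, within, locally. exists (mkposreal 1 ltac:(lra)). auto.
    + reflexivity.
    + intros x y Hx Hy; simpl; subst. unfold V; simpl. apply (RInt_correct (V:=R_CompleteNormedModule)).
      apply ex_RInt_pos; auto; lra.
Qed.

Lemma good_right a h : good a h -> exists l, 0 <= l /\ is_RInt_gen h (at_point 1) (Rbar_locally p_infty) l.
Proof.
  intros (Ha & Hc & Hp & _ & (C & HC & HCb)).
  set (V := fun ab : R * R => RInt h (fst ab) (snd ab)).
  assert (Hloc : forall x y, 1 <= x <= y ->
     0 <= RInt h x y <= 2*C*(exp(-x/2) - exp(-y/2))).
  { intros x y Hxy. apply RInt_bound with (G := fun t => C * exp (-t/2)); try lra; auto.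
    - intros t Ht. split. left; apply Hp; lra. apply HCb; lra.
    - apply is_RInt_exp2. }
  assert (Hcau : exists l, filterlim V (filter_prod (at_point 1) (Rbar_locally p_infty)) (locally l)).
  { apply filterlim_locally_cauchy. intros eps.
    assert (Heps : 0 < eps) by apply cond_pos.
    set (M := Rmax 1 (-2 * ln (eps / (4*C)))).
    assert (HM1 : 1 <= M) by apply Rmax_l.
    assert (HM : 2 * C * exp (- M / 2) <= eps / 2).
    { assert (exp (-M/2) <= eps / (4*C)).
      { rewrite <- (exp_ln (eps / (4*C))).
        2:{ apply Rdiv_lt_0_compat; lra. }
        destruct (Rle_lt_or_eq_dec _ _ (Rmax_r 1 (-2 * ln (eps / (4*C))))) as [H|H];
          fold M in H.
        - left; apply exp_increasing; lra.
        - right; f_equal; rewrite <- H; field. }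
      apply Rle_trans with (2 * C * (eps / (4*C))).
      apply Rmult_le_compat_l; lra. right; field; lra. }
    exists (fun ab => fst ab = 1 /\ M < snd ab). split.
    - apply (Filter_prod _ _ _ (fun x => x = 1) (fun y => M < y)).
      + reflexivity.
      + exists M. auto.
      + intros x y Hx Hy; simpl; auto.
    - intros [u1 u2] [v1 v2] [Hu Hu2] [Hv Hv2]; simpl in *; subst.
      apply ball_R. unfold V; simpl.
      assert (Hch : RInt h 1 u2 + RInt h u2 v2 = RInt h 1 v2).
      { apply (RInt_Chasles (V:=R_CompleteNormedModule)); apply ex_RInt_pos; auto; lra. }
      assert (Hk : forall x y, M < x <= y -> Rabs (RInt h x y) < eps).
      { intros x y Hxy. destruct (Hloc x y) as [H1 H2]; [lra|].
        rewrite Rabs_pos_eq by auto.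
        assert (exp (-x/2) <= exp (-M/2)).
        { left; apply exp_increasing; lra. }
        assert (0 < exp (-y/2)) by apply exp_pos.
        assert (2 * C * exp (- x / 2) <= 2 * C * exp (-M/2)) by (apply Rmult_le_compat_l; lra).
        nra. }
      destruct (Rle_lt_dec u2 v2) as [Huv|Huv].
      + replace (RInt h 1 v2 - RInt h 1 u2) with (RInt h u2 v2) by lra.
        apply Hk; lra.
      + assert (Hsw : opp (RInt h v2 u2) = RInt h u2 v2).
        { apply (opp_RInt_swap (V:=R_CompleteNormedModule)). apply ex_RInt_pos; auto; lra. }
        unfold opp in Hsw; simpl in Hsw.
        replace (RInt h 1 v2 - RInt h 1 u2) with (- RInt h v2 u2) by lra.
        rewrite Rabs_Ropp. apply Hk; lra. }
  destruct Hcau as [l Hl]. exists l. split.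
  - assert (HF : Rbar_le 0 l).
    { apply (filterlim_le (F := filter_prod (at_point 1) (Rbar_locally p_infty))
               (fun _ => 0) V).
      - apply (Filter_prod _ _ _ (fun x => x = 1) (fun y => 1 < y)).
        + reflexivity.
        + exists 1. auto.
        + intros x y Hx Hy; simpl; subst. unfold V; simpl.
          apply RInt_ge_0. lra. apply ex_RInt_pos; auto; lra. intros; left; apply Hp; lra.
      - apply filterlim_const.
      - exact Hl. }
    exact HF.
  - apply (gen_of_lim h _ _ V l); auto.
    apply (Filter_prod _ _ _ (fun x => x = 1) (fun y => 0 < y)).
    + reflexivity.
    + exists 0. auto.
    + intros x y Hx Hy; simpl; subst. unfold V; simpl. apply (RInt_correct (V:=R_CompleteNormedModule)).
      apply ex_RInt_pos; auto; lra.
Qed.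

Lemma good_int a h : good a h ->
  is_RInt_gen h (at_right 0) (Rbar_locally p_infty) (RInt_gen h (at_right 0) (Rbar_locally p_infty))
  /\ 0 < RInt_gen h (at_right 0) (Rbar_locally p_infty).
Proof.
  intros Hg.
  destruct (good_left a h Hg) as [l1 [H1 G1]].
  destruct (good_right a h Hg) as [l2 [H2 G2]].
  assert (G := is_RInt_gen_Chasles h 1 l1 l2 G1 G2).
  rewrite (is_RInt_gen_unique h _ G).
  split; auto. unfold plus; simpl. lra.
Qed.

Definition g (a z : R) := fun t : R => exp (- t ^ 2 - 2 * t * z) * Rpower t (a - 1).
Definition fI (a z : R) := RInt_gen (g a z) (at_right 0) (Rbar_locally p_infty).
Definition gam (a : R) := fun t : R => exp (- t) * Rpower t (a - 1).

Lemma ln_le_xm1 x : 0 < x -> ln x <= x - 1.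
Proof. intros Hx. generalize (exp_ineq1_le (ln x)). rewrite exp_ln; lra. Qed.

Lemma ln_ge0 x : 1 <= x -> 0 <= ln x.
Proof. intros Hx. destruct (Req_dec x 1). subst; rewrite ln_1; lra. left; rewrite <- ln_1; apply ln_increasing; lra. Qed.

Lemma good_g a z : 0 < a -> good a (g a z).
Proof.
  intros Ha. unfold good, g. split; [auto|]. split; [|split; [|split]].
  - intros t Ht. apply (ex_derive_continuous (K:=R_AbsRing) (V:=R_NormedModule)).
    unfold Rpower. auto_derive. lra.
  - intros t Ht. apply Rmult_lt_0_compat. apply exp_pos. apply Rpower_pos.
  - exists (exp (2 * Rabs z)). split. apply exp_pos.
    intros t Ht. apply Rmult_le_compat_r. left; apply Rpower_pos.
    destruct (Rle_lt_or_eq_dec _ _ (Rle_refl 0)) as [|_]; [lra|].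
    assert (- t ^ 2 - 2 * t * z <= 2 * Rabs z).
    { destruct (Rabs_def2 z (Rabs z + 1)) as [Hz1 Hz2]. apply Rlt_le_trans with (Rabs z+1). lra. lra.
      generalize (Rle_abs z) (Rle_abs (-z)); rewrite Rabs_Ropp; intros; nra. }
    destruct (Req_dec (- t ^ 2 - 2 * t * z) (2 * Rabs z)) as [E|E]. rewrite E; lra.
    left; apply exp_increasing; lra.
  - set (B := 2 * Rabs z + Rabs (a - 1)).
    exists (exp ((B + 1/2)^2/4)). split. apply exp_pos.
    intros t Ht. unfold Rpower. rewrite <- exp_plus, <- exp_plus.
    assert (Hl : (a - 1) * ln t <= Rabs (a-1) * t).
    { generalize (ln_le_xm1 t ltac:(lra)) (ln_ge0 t Ht) (Rle_abs (a-1)) (Rle_abs (-(a-1))).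
      rewrite Rabs_Ropp. intros. nra. }
    assert (Hz : - 2 * t * z <= 2 * Rabs z * t).
    { generalize (Rle_abs z) (Rle_abs (-z)); rewrite Rabs_Ropp; intros; nra. }
    assert (- t ^ 2 - 2 * t * z + (a - 1) * ln t <= (B + 1/2)^2/4 + - t/2).
    { assert (0 <= (t - (B + 1/2)/2)^2) by (apply pow2_ge_0). unfold B in *. nra. }
    destruct (Req_dec (- t ^ 2 - 2 * t * z + (a - 1) * ln t) ((B + 1/2)^2/4 + - t/2)) as [E|E].
    rewrite E; lra. left; apply exp_increasing; lra.
Qed.

Lemma good_gam a : 0 < a -> good a (gam a).
Proof.
  intros Ha. unfold good, gam. split; [auto|]. split; [|split; [|split]].
  - intros t Ht. apply (ex_derive_continuous (K:=R_AbsRing) (V:=R_NormedModule)).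
    unfold Rpower. auto_derive. lra.
  - intros t Ht. apply Rmult_lt_0_compat. apply exp_pos. apply Rpower_pos.
  - exists 1. split. lra.
    intros t Ht. apply Rmult_le_compat_r. left; apply Rpower_pos.
    rewrite <- exp_0. destruct (Req_dec t 0). lra. left; apply exp_increasing; lra.
  - assert (HL : 0 <= Rabs (a-1)) by apply Rabs_pos.
    assert (HaL : a - 1 <= Rabs (a-1)) by apply Rle_abs.
    revert HL HaL. generalize (Rabs (a-1)). intros L HL HaL.
    set (m := 2 * L + 2).
    exists (exp (L * Rabs (ln m))). split. apply exp_pos.
    intros t Ht. unfold Rpower. rewrite <- exp_plus, <- exp_plus.
    assert (Hl : (a - 1) * ln t <= L * ln t).
    { generalize (ln_ge0 t Ht). intros. nra. }
    assert (Hm : ln t <= t / m + Rabs (ln m)).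
    { assert (0 < m) by (unfold m; lra).
      replace (ln t) with (ln (t / m) + ln m).
      2:{ rewrite ln_div; try lra. }
      generalize (ln_le_xm1 (t/m) ltac:(apply Rdiv_lt_0_compat; lra)) (Rle_abs (ln m)). lra. }
    assert (L * ln t <= L * (t / m) + L * Rabs (ln m)) by nra.
    assert (L * (t / m) <= t / 2).
    { unfold m. apply Rmult_le_reg_r with (2 * L + 2). lra.
      unfold Rdiv. field_simplify; try lra. }
    assert (- t + (a - 1) * ln t <= L * Rabs (ln m) + - t/2) by lra.
    destruct (Req_dec (- t + (a - 1) * ln t) (L * Rabs (ln m) + - t/2)) as [E|E].
    rewrite E; lra. left; apply exp_increasing; lra.
Qed.

Notation FA := (at_right 0).
Notation FB := (Rbar_locally p_infty).

Lemma isg_lin (f1 f2 : R -> R) (l1 l2 c1 c2 : R) :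
  is_RInt_gen f1 FA FB l1 -> is_RInt_gen f2 FA FB l2 ->
  is_RInt_gen (fun t => c1 * f1 t + c2 * f2 t) FA FB (c1 * l1 + c2 * l2).
Proof.
  intros H1 H2.
  exact (is_RInt_gen_plus (V:=R_NormedModule) _ _ _ _ (is_RInt_gen_scal (V:=R_NormedModule) _ c1 _ H1) (is_RInt_gen_scal (V:=R_NormedModule) _ c2 _ H2)).
Qed.

Lemma isg_ext (f1 f2 : R -> R) (l : R) : (forall t, 0 < t -> f1 t = f2 t) ->
  is_RInt_gen f1 FA FB l -> is_RInt_gen f2 FA FB l.
Proof.
  intros He H. apply (is_RInt_gen_ext (V:=R_NormedModule) f1 f2); auto.
  apply (Filter_prod _ _ _ (fun x => 0 < x) (fun y => 0 < y)).
  + unfold at_right, within, locally. exists (mkposreal 1 ltac:(lra)). auto.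
  + exists 0. auto.
  + intros x y Hx Hy; simpl. intros u Hu. apply He.
    assert (0 < Rmin x y) by (apply Rmin_glb_lt; lra). lra.
Qed.

Lemma fI_is a z : 0 < a -> is_RInt_gen (g a z) FA FB (fI a z).
Proof. intros Ha. exact (proj1 (good_int a _ (good_g a z Ha))). Qed.

Lemma fI_pos a z : 0 < a -> 0 < fI a z.
Proof. intros Ha. exact (proj2 (good_int a _ (good_g a z Ha))). Qed.

Lemma g_succ a z t : 0 < t -> g (a+1) z t = t * g a z t.
Proof.
  intros Ht. unfold g. replace (a + 1 - 1) with (1 + (a - 1)) by ring.
  rewrite Rpower_plus, Rpower_1 by auto. ring.
Qed.

Lemma g_shift a z t : 0 < t -> g (a+2) (z-1) t = t^2 * exp (2*t) * g a z t.
Proof.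
  intros Ht. unfold g. replace (a + 2 - 1) with (1 + (1 + (a - 1))) by ring.
  rewrite !Rpower_plus, Rpower_1 by auto.
  replace (- t ^ 2 - 2 * t * (z - 1)) with ((- t ^ 2 - 2 * t * z) + 2 * t) by ring.
  rewrite exp_plus. ring.
Qed.

Lemma g_z a z h t : g a (z+h) t = exp (-2*t*h) * g a z t.
Proof.
  unfold g. replace (- t ^ 2 - 2 * t * (z + h)) with ((- t ^ 2 - 2 * t * z) + (-2*t*h)) by ring.
  rewrite exp_plus. ring.
Qed.

Lemma exp_taylor x : Rabs (exp x - 1 - x) <= x^2 * exp (Rabs x).
Proof.
  assert (E1 := exp_ineq1_le x). assert (E2 := exp_ineq1_le (-x)).
  assert (Hp := exp_pos x).
  rewrite Rabs_pos_eq by lra.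
  destruct (Rle_lt_dec 0 x) as [Hx|Hx].
  - rewrite Rabs_pos_eq by lra.
    assert (H1 : exp x * exp (-x) = 1) by (rewrite <- exp_plus; replace (x + -x) with 0 by ring; apply exp_0).
    assert (H2 : exp x - 1 <= x * exp x) by nra.
    nra.
  - rewrite Rabs_left by lra.
    assert (H1 : exp x * exp (-x) = 1) by (rewrite <- exp_plus; replace (x + -x) with 0 by ring; apply exp_0).
    assert (H3 : 1 <= exp (-x)) by (rewrite <- exp_0; left; apply exp_increasing; lra).
    assert (H2 : exp x * (1 - x) <= 1) by nra.
    assert (H4 : exp x - 1 - x <= x^2) by nra.
    assert (x^2 <= x^2 * exp (-x)) by nra.
    lra.
Qed.

Lemma fI_deriv a z : 0 < a -> is_derive (fI a) z (-2 * fI (a+1) z).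
Proof.
  intros Ha. apply is_derive_Reals. intros eps Heps.
  set (M := fI (a+2) (z-1)).
  assert (HM : 0 < M) by (apply fI_pos; lra).
  assert (Hd : 0 < Rmin (1/2) (eps / (4*M))).
  { apply Rmin_glb_lt. lra. apply Rdiv_lt_0_compat; lra. }
  exists (mkposreal _ Hd). intros h Hh0 Hhd. simpl in Hhd.
  assert (Hh1 : Rabs h <= 1/2) by (generalize (Rmin_l (1/2) (eps / (4*M))); lra).
  assert (Hh2 : Rabs h < eps / (4*M)) by (generalize (Rmin_r (1/2) (eps / (4*M))); lra).
  assert (I1 := isg_lin _ _ _ _ 1 (-1) (fI_is a (z+h) Ha) (fI_is a z Ha)).
  assert (Ha1 : 0 < a + 1) by lra.
  assert (I2 := isg_lin _ _ _ _ 1 (2*h) I1 (fI_is (a+1) z Ha1)).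
  assert (Ha2 : 0 < a + 2) by lra. assert (I3 := is_RInt_gen_scal (V:=R_NormedModule) _ (4*h^2) _ (fI_is (a+2) (z-1) Ha2)).
  assert (Hn : Rabs (1 * (1 * fI a (z+h) + -1 * fI a z) + 2*h*fI (a+1) z) <= 4*h^2 * M).
  { refine (RInt_gen_norm (V:=R_CompleteNormedModule) (Fa:=FA) (Fb:=FB) _ _ _ _ _ _ I2 I3).
    - apply (Filter_prod _ _ _ (fun x => x < 1) (fun y => 1 < y)).
      + unfold at_right, within, locally. exists (mkposreal 1 ltac:(lra)). intros y Hy _.
        apply ball_R in Hy. apply Rabs_def2 in Hy. unfold minus, plus, opp in Hy; simpl in Hy. lra.
      + exists 1. auto.
      + intros x y Hx Hy; simpl; lra.
    - apply (Filter_prod _ _ _ (fun x => 0 < x) (fun y => True)).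
      + unfold at_right, within, locally. exists (mkposreal 1 ltac:(lra)). auto.
      + exists 0. auto.
      + intros x y Hx _; simpl. intros t Ht.
        assert (Ht0 : 0 < t) by lra.
        change (norm ?u) with (Rabs u). unfold scal; simpl; unfold mult; simpl.
        rewrite g_z, g_succ, g_shift by auto.
        assert (HG : 0 < g a z t) by (apply (good_g a z Ha); auto).
        replace (1 * (1 * (exp (-2 * t * h) * g a z t) + -1 * g a z t) + 2 * h * (t * g a z t))
          with (g a z t * (exp (-2*t*h) - 1 - (-2*t*h))) by ring.
        rewrite Rabs_mult, (Rabs_pos_eq (g a z t)) by lra.
        assert (HT := exp_taylor (-2*t*h)).
        assert (exp (Rabs (-2*t*h)) <= exp (2*t)).
        { replace (Rabs (-2*t*h)) with (2*t*Rabs h).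
          2:{ rewrite !Rabs_mult. rewrite (Rabs_pos_eq t) by lra.
              replace (Rabs (-2)) with 2 by (rewrite Rabs_left; lra). ring. }
          destruct (Req_dec (2 * t * Rabs h) (2*t)) as [E|E]. rewrite E; lra.
          left; apply exp_increasing. assert (0 <= Rabs h) by apply Rabs_pos. nra. }
        assert (0 <= (-2*t*h)^2) by apply pow2_ge_0.
        assert ((-2*t*h)^2 * exp (Rabs (-2*t*h)) <= (-2*t*h)^2 * exp (2*t)) by nra.
        assert (Rabs (exp (-2 * t * h) - 1 - -2 * t * h) <= (-2*t*h)^2 * exp (2*t)) by lra.
        assert (g a z t * Rabs (exp (-2 * t * h) - 1 - -2 * t * h) <= g a z t * ((-2*t*h)^2 * exp (2*t))).
        { apply Rmult_le_compat_l; lra. }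
        eapply Rle_trans; [exact H3|]. right; ring. }
  assert (Habs : 0 < Rabs h) by (apply Rabs_pos_lt; auto).
  replace ((fI a (z + h) - fI a z) / h - -2 * fI (a + 1) z)
    with ((1 * (1 * fI a (z+h) + -1 * fI a z) + 2*h*fI (a+1) z) / h) by (field; auto).
  unfold Rdiv. rewrite Rabs_mult, Rabs_inv.
  apply Rle_lt_trans with (4 * h^2 * M * / Rabs h).
  { apply Rmult_le_compat_r; [left; apply Rinv_0_lt_compat; auto | auto]. }
  replace (4 * h^2 * M * / Rabs h) with (4 * M * Rabs h).
  2:{ rewrite <- pow2_abs. field. lra. }
  apply Rlt_le_trans with (4 * M * (eps / (4 * M))).
  apply Rmult_lt_compat_l; lra. right; field; lra.
Qed.


Lemma good_lim a h : 1 < a -> good a h -> forall eps, 0 < eps ->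
  exists d M, 0 < d /\ (forall t, 0 < t < d -> h t < eps) /\ (forall t, M < t -> h t < eps).
Proof.
  intros Ha1 (Ha & Hc & Hp & (A & HA & HAb) & (C & HC & HCb)) eps Heps.
  destruct (Rpower_small (a-1) (eps / (2*A))) as [d [Hd Hda]]; [lra| apply Rdiv_lt_0_compat; lra|].
  exists d, (Rmax 1 (-2 * ln (eps / (2*C)))). split; [lra|split].
  - intros t Ht. apply Rle_lt_trans with (A * Rpower t (a-1)). apply HAb; lra.
    assert (Rpower t (a-1) <= Rpower d (a-1)) by (apply Rle_Rpower_l; lra).
    apply Rle_lt_trans with (A * (eps / (2 * A))).
    apply Rmult_le_compat_l; lra. replace (A * (eps / (2 * A))) with (eps/2) by (field; lra). lra.
  - intros t Ht. assert (H1 := Rmax_l 1 (-2 * ln (eps / (2*C)))).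
    assert (H2 := Rmax_r 1 (-2 * ln (eps / (2*C)))).
    apply Rle_lt_trans with (C * exp (-t/2)). apply HCb; lra.
    assert (exp (-t/2) < eps / (2*C)).
    { rewrite <- (exp_ln (eps / (2*C))) by (apply Rdiv_lt_0_compat; lra).
      apply exp_increasing. lra. }
    apply Rlt_le_trans with (C * (eps / (2*C))). apply Rmult_lt_compat_l; lra.
    replace (C * (eps / (2 * C))) with (eps/2) by (field; lra). lra.
Qed.

Lemma fI_rec a z : 0 < a -> a * fI a z = 2 * fI (a+2) z + 2 * z * fI (a+1) z.
Proof.
  intros Ha.
  set (B := g (a+1) z).
  set (dB := fun t => a * g a z t + (-2) * g (a+2) z t + (-2*z) * g (a+1) z t).
  assert (HdB : forall t, 0 < t -> is_derive B t (dB t)).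
  { intros t Ht. unfold B, dB.
    assert (E1 : g (a+1) z t = t * g a z t) by (apply g_succ; auto).
    assert (E2 : g (a+2) z t = t^2 * g a z t).
    { replace (a+2) with ((a+1)+1) by ring. rewrite g_succ, E1 by auto. ring. }
    rewrite E1, E2.
    apply (is_derive_ext (fun t => exp (- t ^ 2 - 2 * t * z) * exp (a * ln t))).
    { intros u. unfold g. replace (a + 1 - 1) with a by ring. reflexivity. }
    assert (HP : exp (a * ln t) = t * Rpower t (a-1)).
    { replace (exp (a * ln t)) with (Rpower t (1 + (a-1))) by (unfold Rpower; f_equal; ring).
      rewrite Rpower_plus, Rpower_1; auto. }
    auto_derive; [lra|]. rewrite HP. unfold g.
    replace (- (t * (t * 1)) + - (2 * t * z)) with (- t ^ 2 - 2 * t * z) by ring. field. lra. }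
  assert (HcdB : forall t, 0 < t -> continuous dB t).
  { intros t Ht. unfold dB.
    apply (ex_derive_continuous (K:=R_AbsRing) (V:=R_NormedModule)).
    unfold g, Rpower. auto_derive. repeat split; lra. }
  assert (Hg1 : good (a+1) B) by (apply good_g; lra).
  assert (HBp : forall t, 0 < t -> 0 < B t) by (apply Hg1).
  set (V := fun ab : R * R => B (snd ab) - B (fst ab)).
  assert (I0 : is_RInt_gen dB FA FB 0).
  { apply (gen_of_lim dB _ _ V 0).
    - apply (Filter_prod _ _ _ (fun x => 0 < x) (fun y => 0 < y)).
      + unfold at_right, within, locally. exists (mkposreal 1 ltac:(lra)). auto.
      + exists 0. auto.
      + intros x y Hx Hy; simpl. unfold V; simpl.
        apply (is_RInt_derive (V:=R_CompleteNormedModule) B dB).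
        * intros t Ht. apply HdB. assert (0 < Rmin x y) by (apply Rmin_glb_lt; lra). lra.
        * intros t Ht. apply HcdB. assert (0 < Rmin x y) by (apply Rmin_glb_lt; lra). lra.
    - apply filterlim_locally. intros eps.
      destruct (good_lim (a+1) B ltac:(lra) Hg1 (eps/2) ltac:(generalize (cond_pos eps); lra))
        as [d [M [Hd [H1 H2]]]].
      apply (Filter_prod _ _ _ (fun x => 0 < x < d) (fun y => M < y /\ 0 < y)).
      + unfold at_right, within, locally. exists (mkposreal d Hd). intros y Hy Hy0.
        apply ball_R in Hy. apply Rabs_def2 in Hy. unfold minus, plus, opp in Hy; simpl in Hy.
        simpl in *. lra.
      + exists (Rmax M 0). intros x Hx. split. generalize (Rmax_l M 0); lra. generalize (Rmax_r M 0); lra.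
      + intros x y Hx Hy. apply ball_R. unfold V; simpl.
        assert (B y < eps/2) by (apply H2; lra). assert (B x < eps/2) by (apply H1; lra).
        assert (0 < B y) by (apply HBp; lra). assert (0 < B x) by (apply HBp; lra).
        apply Rabs_def1; lra. }
  assert (I1 := isg_lin _ _ _ _ a (-2) (fI_is a z Ha) (fI_is (a+2) z ltac:(lra))).
  assert (I2 := isg_lin _ _ _ _ 1 (-2*z) I1 (fI_is (a+1) z ltac:(lra))).
  assert (I3 : is_RInt_gen dB FA FB (1 * (a * fI a z + -2 * fI (a + 2) z) + -2 * z * fI (a + 1) z)).
  { refine (isg_ext _ _ _ _ I2). intros t _. unfold dB. simpl. ring. }
  assert (U := is_RInt_gen_unique (V:=R_CompleteNormedModule) _ _ I3).
  rewrite (is_RInt_gen_unique (V:=R_CompleteNormedModule) _ _ I0) in U.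
  lra.
Qed.

Lemma der_eq (f : R -> R) (x l l' : R) : is_derive f x l -> l = l' -> is_derive f x l'.
Proof. intros H E; subst; auto. Qed.

Lemma dmul (f h : R -> R) x df dh : is_derive f x df -> is_derive h x dh ->
  is_derive (fun t => f t * h t) x (df * h x + f x * dh).
Proof.
  intros H1 H2. apply is_derive_Reals in H1, H2. apply is_derive_Reals.
  exact (derivable_pt_lim_mult f h x df dh H1 H2).
Qed.

Lemma dplus (f h : R -> R) x df dh : is_derive f x df -> is_derive h x dh ->
  is_derive (fun t => f t + h t) x (df + dh).
Proof.
  intros H1 H2. apply is_derive_Reals in H1, H2. apply is_derive_Reals.
  exact (derivable_pt_lim_plus f h x df dh H1 H2).
Qed.

Lemma dminus (f h : R -> R) x df dh : is_derive f x df -> is_derive h x dh ->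
  is_derive (fun t => f t - h t) x (df - dh).
Proof.
  intros H1 H2. apply is_derive_Reals in H1, H2. apply is_derive_Reals.
  exact (derivable_pt_lim_minus f h x df dh H1 H2).
Qed.

Lemma dscal (f : R -> R) c x df : is_derive f x df -> is_derive (fun t => c * f t) x (c * df).
Proof.
  intros H1. apply is_derive_Reals in H1. apply is_derive_Reals.
  exact (derivable_pt_lim_scal f c x df H1).
Qed.

Lemma dexp (f : R -> R) x df : is_derive f x df -> is_derive (fun t => exp (f t)) x (df * exp (f x)).
Proof.
  intros H1. apply is_derive_Reals in H1. apply is_derive_Reals.
  rewrite Rmult_comm.
  apply (derivable_pt_lim_comp f exp x df (exp (f x)) H1). apply derivable_pt_lim_exp.
Qed.

Lemma dln (f : R -> R) x df : 0 < f x -> is_derive f x df -> is_derive (fun t => ln (f t)) x (df / f x).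
Proof.
  intros Hp H1. apply is_derive_Reals in H1. apply is_derive_Reals.
  replace (df / f x) with (/ f x * df) by (unfold Rdiv; ring).
  apply (derivable_pt_lim_comp f ln x df (/ f x) H1). apply derivable_pt_lim_ln; auto.
Qed.

Lemma did x : is_derive (fun t : R => t) x 1.
Proof. apply is_derive_Reals. apply derivable_pt_lim_id. Qed.

Lemma dsq x : is_derive (fun t : R => t^2) x (2 * x).
Proof. apply (der_eq _ _ (1 * x + x * 1)). apply (is_derive_ext (fun t => t * t)). intros t. unfold pow. rewrite Rmult_1_r. reflexivity.
  apply (dmul _ _ x _ _ (did x) (did x)). lra. Qed.

Lemma nonincr (f df : R -> R) : (forall z, is_derive f z (df z)) -> (forall z, df z <= 0) ->
  forall a b, a <= b -> f b <= f a.
Proof.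
  intros Hd Hn a b Hab. destruct (Req_dec a b) as [E|E]. subst; lra.
  destruct (MVT_cor2 f df a b) as [c [Hc _]]. lra.
  intros c _. apply is_derive_Reals. auto.
  assert (df c * (b - a) <= 0). { assert (df c <= 0) by auto. nra. } lra.
Qed.

Lemma strdecr (f df : R -> R) : (forall z, is_derive f z (df z)) -> (forall z, df z < 0) ->
  forall a b, a < b -> f b < f a.
Proof.
  intros Hd Hn a b Hab.
  destruct (MVT_cor2 f df a b) as [c [Hc _]]. lra.
  intros c _. apply is_derive_Reals. auto.
  assert (df c * (b - a) < 0). { assert (df c < 0) by auto. nra. } lra.
Qed.

Definition xr (a z : R) := fI (a+1) z / fI a z.

Lemma xr_pos a z : 0 < a -> 0 < xr a z.
Proof. intros Ha. unfold xr. apply Rdiv_lt_0_compat; apply fI_pos; lra. Qed.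

Lemma xr_rec a (z : R) : 0 < a -> a = 2 * xr a z * xr (a+1) z + 2 * z * xr a z.
Proof.
  intros Ha. unfold xr.
  assert (H0 := fI_pos a z Ha). assert (H1 := fI_pos (a+1) z ltac:(lra)).
  replace (a + 1 + 1) with (a + 2) by ring.
  assert (R := fI_rec a z Ha).
  replace (2 * (fI (a + 1) z / fI a z) * (fI (a + 2) z / fI (a + 1) z) + 2 * z * (fI (a + 1) z / fI a z))
    with ((2 * fI (a + 2) z + 2 * z * fI (a + 1) z) / fI a z) by (field; lra).
  rewrite <- R. field. lra.
Qed.

Lemma xr_der a (z : R) : 0 < a -> is_derive (xr a) z (- a + 2 * z * xr a z + 2 * (xr a z)^2).
Proof.
  intros Ha. unfold xr.
  assert (H0 := fI_pos a z Ha). assert (H1 := fI_pos (a+1) z ltac:(lra)).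
  eapply der_eq.
  apply (is_derive_div _ _ z _ _ (fI_deriv (a+1) z ltac:(lra)) (fI_deriv a z Ha)). lra.
  replace (a + 1 + 1) with (a + 2) by ring.
  assert (R := fI_rec a z Ha).
  replace (fI (a+2) z) with ((a * fI a z - 2 * z * fI (a + 1) z) / 2) by lra.
  field. lra.
Qed.

Lemma xr_up a (z : R) : 0 < a -> 0 < z -> xr a z <= a / (2 * z).
Proof.
  intros Ha Hz. assert (E := xr_rec a z Ha).
  assert (P0 := xr_pos a z Ha). assert (P1 := xr_pos (a+1) z ltac:(lra)).
  apply Rmult_le_reg_r with (2 * z). lra.
  replace (a / (2 * z) * (2 * z)) with a by (field; lra). nra.
Qed.

Lemma xr_low a (z : R) : 0 < a -> 0 < z ->
  (a / (2 * z)) * (1 - (a + 1) / (2 * z^2)) <= xr a z.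
Proof.
  intros Ha Hz. assert (E := xr_rec a z Ha).
  assert (P0 := xr_pos a z Ha). assert (P1 := xr_pos (a+1) z ltac:(lra)).
  assert (U0 := xr_up a z Ha Hz). assert (U1 := xr_up (a+1) z ltac:(lra) Hz).
  assert (H : xr a z * xr (a+1) z <= (a / (2*z)) * ((a+1)/(2*z))).
  { apply Rmult_le_compat; lra. }
  set (K := a * (a+1) / (4 * z^2)).
  assert (HK : (a / (2*z)) * ((a+1)/(2*z)) = K) by (unfold K; field; lra).
  assert (H2 : a - 2 * K <= 2 * z * xr a z) by lra.
  replace (a / (2 * z) * (1 - (a + 1) / (2 * z ^ 2))) with ((a - 2 * K) / (2 * z))
    by (unfold K; field; lra).
  apply Rmult_le_reg_r with (2 * z). lra.
  replace ((a - 2 * K) / (2 * z) * (2 * z)) with (a - 2 * K) by (field; lra). lra.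
Qed.

Lemma prod_low (b k y u v : R) : 0 < b -> 0 < k -> 0 < y -> (b + 2) * y <= 1 ->
  k * b * (1 - (b+1) * y) <= u -> k * (b+1) * (1 - (b+2) * y) <= v ->
  k^2 * (b * (b+1) * (1 - (2*b+3) * y)) <= u * v.
Proof.
  intros Hb Hk Hy Hby Hu Hv.
  assert (L1 : 0 <= k * b * (1 - (b+1) * y)).
  { apply Rmult_le_pos. apply Rmult_le_pos; lra. lra. }
  assert (L2 : 0 <= k * (b+1) * (1 - (b+2) * y)).
  { apply Rmult_le_pos. apply Rmult_le_pos; lra. lra. }
  apply Rle_trans with ((k * b * (1 - (b+1) * y)) * (k * (b+1) * (1 - (b+2) * y))).
  - replace ((k * b * (1 - (b+1) * y)) * (k * (b+1) * (1 - (b+2) * y)))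
      with (k^2 * (b * (b+1) * (1 - (2*b+3) * y)) + k^2 * (b * (b+1)) * ((b+1)*(b+2)*y^2)) by ring.
    assert (0 <= k^2 * (b * (b+1)) * ((b+1)*(b+2)*y^2)).
    { apply Rmult_le_pos. apply Rmult_le_pos. apply pow2_ge_0. nra.
      apply Rmult_le_pos. nra. apply pow2_ge_0. }
    lra.
  - apply Rmult_le_compat; lra.
Qed.

Lemma D_large p c z0 : 0 < p -> 0 < c ->
  exists Z, z0 <= Z /\ 0 < 2 * xr (p+c) Z - xr p Z - xr (p+2*c) Z.
Proof.
  intros Hp Hc.
  set (q := p + c). set (s := p + 2*c).
  set (S := p*(p+1)*(2*p+3) + s*(s+1)*(2*s+3)).
  assert (HS : 0 < S) by (unfold S, s; nra).
  assert (HR1 := Rmax_r z0 1). assert (HR0 := Rmax_l z0 1).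
  assert (HSc : 0 < S / c^2) by (apply Rdiv_lt_0_compat; nra).
  set (Z := Rmax z0 1 + (s + 2) + S / (c^2)).
  assert (HZ1 : 1 <= Z).
  { unfold Z.  unfold s; lra. }
  assert (HZ0 : z0 <= Z).
  { unfold Z.  unfold s; lra. }
  exists Z. split; auto.
  assert (HZ : 0 < Z) by lra.
  set (k := / (2 * Z)). set (y := / (2 * Z^2)).
  assert (Hk : 0 < k) by (unfold k; apply Rinv_0_lt_compat; lra).
  assert (Hy : 0 < y) by (unfold y; apply Rinv_0_lt_compat; nra).
  assert (HZs : s + 2 <= Z).
  { unfold Z.  lra. }
  assert (HZS : S <= c^2 * Z).
  { unfold Z. 
    replace (c^2 * (Rmax z0 1 + (s + 2) + S / c ^ 2)) with (c^2 * (Rmax z0 1 + (s + 2)) + S) by (field; nra).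
    assert (0 <= c^2 * (Rmax z0 1 + (s + 2))). { apply Rmult_le_pos. nra. unfold s; lra. } lra. }
  assert (Hys : (s + 2) * y <= 1).
  { unfold y. apply Rmult_le_reg_r with (2 * Z^2). nra.
    rewrite Rmult_assoc, Rinv_l by nra. nra. }
  assert (HyS : S * y <= c^2 / 2).
  { unfold y. apply Rmult_le_reg_r with (2 * Z^2). nra.
    rewrite Rmult_assoc, Rinv_l by nra.
    replace (c^2 / 2 * (2 * Z^2)) with (c^2 * Z * Z) by (field). nra. }
  assert (Lb : forall b, 0 < b -> k * b * (1 - (b+1) * y) <= xr b Z /\ xr b Z <= k * b).
  { intros b Hb. split.
    - generalize (xr_low b Z Hb HZ). unfold k, y. intros H. eapply Rle_trans; [|exact H].
      right. field. nra.
    - generalize (xr_up b Z Hb HZ). unfold k. intros H. eapply Rle_trans; [exact H|].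
      right. field. lra. }
  assert (Rc : forall b, 0 < b -> xr b Z = (b - 2 * (xr b Z * xr (b+1) Z)) / (2 * Z)).
  { intros b Hb. generalize (xr_rec b Z Hb). intros E.
    replace (b - 2 * (xr b Z * xr (b + 1) Z)) with (2 * Z * xr b Z) by lra. field. lra. }
  rewrite (Rc q), (Rc p), (Rc s) by (unfold q, s; lra).
  assert (Pp := prod_low p k y (xr p Z) (xr (p+1) Z) Hp Hk Hy ltac:(unfold s in Hys; nra)
                  (proj1 (Lb p Hp)) ltac:(replace (p + 2) with (p + 1 + 1) by ring; apply (Lb (p+1)); lra)).
  assert (Ps := prod_low s k y (xr s Z) (xr (s+1) Z) ltac:(unfold s; lra) Hk Hy Hys
                  (proj1 (Lb s ltac:(unfold s; lra))) ltac:(replace (s + 2) with (s + 1 + 1) by ring; apply (Lb (s+1)); unfold s; lra)).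
  assert (Pq : xr q Z * xr (q+1) Z <= k^2 * (q * (q+1))).
  { destruct (Lb q ltac:(unfold q; lra)) as [_ H1]. destruct (Lb (q+1) ltac:(unfold q; lra)) as [_ H2].
    assert (0 < xr q Z) by (apply xr_pos; unfold q; lra).
    assert (0 < xr (q+1) Z) by (apply xr_pos; unfold q; lra).
    apply Rle_trans with ((k * q) * (k * (q+1))). apply Rmult_le_compat; lra. right; ring. }
  assert (Key : 0 < xr p Z * xr (p+1) Z + xr s Z * xr (s+1) Z - 2 * (xr q Z * xr (q+1) Z)).
  { assert (E : p * (p+1) * (1 - (2*p+3)*y) + s * (s+1) * (1 - (2*s+3)*y) - 2 * (q * (q+1))
               = 2 * c^2 - S * y) by (unfold S, q, s; ring).
    assert (0 < k^2) by nra.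
    assert (0 < k^2 * (2 * c^2 - S * y)) by (apply Rmult_lt_0_compat; nra).
    nra. }
  apply Rmult_lt_reg_r with (2 * Z). lra. rewrite Rmult_0_l.
  replace ((2 * ((q - 2 * (xr q Z * xr (q + 1) Z)) / (2 * Z)) - (p - 2 * (xr p Z * xr (p + 1) Z)) / (2 * Z) -
     (s - 2 * (xr s Z * xr (s + 1) Z)) / (2 * Z)) * (2 * Z))
    with (2 * (xr p Z * xr (p+1) Z + xr s Z * xr (s+1) Z - 2 * (xr q Z * xr (q+1) Z))
          + (2 * q - p - s)) by (field; lra).
  replace (2 * q - p - s) with 0 by (unfold q, s; ring). lra.
Qed.

Lemma dlnf a (z : R) : 0 < a -> is_derive (fun t => ln (fI a t)) z (-2 * xr a z).
Proof.
  intros Ha. eapply der_eq. apply dln. apply fI_pos; auto. apply fI_deriv; auto.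
  unfold xr. field. assert (H := fI_pos a z Ha). lra.
Qed.

Lemma D_pos p c (z : R) : 0 < p -> 0 < c -> 0 < 2 * xr (p+c) z - xr p z - xr (p+2*c) z.
Proof.
  intros Hp Hc.
  set (D := fun z => 2 * xr (p+c) z - xr p z - xr (p+2*c) z).
  set (K := fun z => z^2 - (ln (fI p z) + ln (fI (p+2*c) z))/2 - ln (fI (p+c) z)).
  set (Phi := fun z => D z * exp (- K z)).
  set (dPhi := fun z => - (xr p z - xr (p+2*c) z)^2 * exp (- K z)).
  assert (Hd : forall z, is_derive Phi z (dPhi z)).
  { intros w.
    assert (HD : is_derive D w (2 * (- (p+c) + 2 * w * xr (p+c) w + 2 * (xr (p+c) w)^2)
                                - (- p + 2 * w * xr p w + 2 * (xr p w)^2)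
                                - (- (p+2*c) + 2 * w * xr (p+2*c) w + 2 * (xr (p+2*c) w)^2))).
    { unfold D.
      apply (dminus (fun t => 2 * xr (p+c) t - xr p t) (fun t => xr (p+2*c) t)).
      apply (dminus (fun t => 2 * xr (p+c) t) (fun t => xr p t)).
      apply (dscal (xr (p+c))). apply xr_der; lra.
      apply xr_der; lra. apply xr_der; lra. }
    assert (HK : is_derive K w (2 * w - ((-2 * xr p w) + (-2 * xr (p+2*c) w))/2 - (-2 * xr (p+c) w))).
    { unfold K.
      apply (dminus (fun t => t^2 - (ln (fI p t) + ln (fI (p+2*c) t))/2) (fun t => ln (fI (p+c) t))).
      apply (dminus (fun t => t^2) (fun t => (ln (fI p t) + ln (fI (p+2*c) t))/2)).
      apply dsq.
      apply (der_eq _ _ (/2 * ((-2 * xr p w) + (-2 * xr (p+2*c) w)))).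
      apply (is_derive_ext (fun t => /2 * (ln (fI p t) + ln (fI (p+2*c) t)))).
      { intros t. unfold Rdiv. apply Rmult_comm. }
      apply (dscal (fun t => ln (fI p t) + ln (fI (p+2*c) t))).
      apply (dplus (fun t => ln (fI p t)) (fun t => ln (fI (p+2*c) t))); apply dlnf; lra.
      unfold Rdiv; ring.
      apply dlnf; lra. }
    assert (HK' : is_derive (fun z => - K z) w (-1 * (2 * w - ((-2 * xr p w) + (-2 * xr (p+2*c) w))/2 - (-2 * xr (p+c) w)))).
    { apply (is_derive_ext (fun z => -1 * K z)). intros t. lra. exact (dscal K (-1) w _ HK). }
    assert (HE := dexp (fun z => - K z) w _ HK').
    assert (HE' : is_derive (fun z => exp (- K z)) w
                   (-1 * (2 * w - ((-2 * xr p w) + (-2 * xr (p+2*c) w))/2 - (-2 * xr (p+c) w))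
                    * exp (- K w))).
    { exact HE. }
    eapply der_eq. apply (dmul D (fun z => exp (- K z)) w _ _ HD HE').
    unfold dPhi, D. cbv beta. clear HD HK HK' HE HE'. generalize (xr p w) (xr (p+c) w) (xr (p+2*c) w) (exp (- K w)). clear -p. intros x1 x2 x3 e. generalize (w : R). intros v. field. }
  assert (Hn : forall z, dPhi z <= 0).
  { intros w. unfold dPhi. assert (0 <= (xr p w - xr (p+2*c) w)^2) by apply pow2_ge_0.
    assert (0 < exp (- K w)) by apply exp_pos. clear -H H0. nra. }
  destruct (Rlt_or_le 0 (D z)) as [H|H]; [exact H|exfalso].
  destruct (D_large p c z Hp Hc) as [Z [HZ HDZ]].
  assert (M := nonincr Phi dPhi Hd Hn z Z HZ).
  unfold Phi in M.
  assert (0 < exp (- K z)) by apply exp_pos.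
  assert (0 < exp (- K Z)) by apply exp_pos.
  fold (D Z) in HDZ.
  assert (0 < D Z * exp (- K Z)) by (apply Rmult_lt_0_compat; auto).
  assert (D z * exp (- K z) <= 0) by (clear -H H0; nra).
  lra.
Qed.

Lemma Gamma_pos a : 0 < a -> 0 < Gamma_fn a.
Proof. intros Ha. exact (proj2 (good_int a _ (good_gam a Ha))). Qed.

Lemma herm_eq a z : hermite_neg a z = / Gamma_fn a * fI a z.
Proof. reflexivity. Qed.

Lemma F_decr p c : 0 < p -> 0 < c -> forall x y : R, x < y ->
  fI (p+c) y ^ 2 / (fI p y * fI (p+2*c) y) < fI (p+c) x ^ 2 / (fI p x * fI (p+2*c) x).
Proof.
  intros Hp Hc.
  set (F := fun z => fI (p+c) z ^ 2 / (fI p z * fI (p+2*c) z)).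
  set (dF := fun z => -2 * (2 * xr (p+c) z - xr p z - xr (p+2*c) z) * F z).
  assert (Hd : forall z, is_derive F z (dF z)).
  { intros w.
    assert (P0 := fI_pos p w Hp). assert (P1 := fI_pos (p+c) w ltac:(lra)).
    assert (P2 := fI_pos (p+2*c) w ltac:(lra)).
    assert (N : is_derive (fun z => fI (p+c) z ^ 2) w
                  (-2 * fI (p+c+1) w * fI (p+c) w + fI (p+c) w * (-2 * fI (p+c+1) w))).
    { apply (is_derive_ext (fun z => fI (p+c) z * fI (p+c) z)).
      { intros t. unfold pow. rewrite Rmult_1_r. reflexivity. }
      apply (dmul (fI (p+c)) (fI (p+c))); apply fI_deriv; lra. }
    assert (Dn : is_derive (fun z => fI p z * fI (p+2*c) z) w
                  (-2 * fI (p+1) w * fI (p+2*c) w + fI p w * (-2 * fI (p+2*c+1) w))).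
    { apply (dmul (fI p) (fI (p+2*c))); apply fI_deriv; lra. }
    eapply der_eq. apply (is_derive_div _ _ w _ _ N Dn).
    { apply Rgt_not_eq. apply Rmult_lt_0_compat; auto. }
    unfold dF, F, xr.
    generalize (fI (p+c+1) w) (fI (p+1) w) (fI (p+2*c+1) w). intros a1 a2 a3.
    field. lra. }
  assert (Hn : forall z, dF z < 0).
  { intros w. unfold dF.
    assert (H1 := D_pos p c w Hp Hc).
    assert (0 < F w).
    { unfold F. apply Rdiv_lt_0_compat. apply pow_lt. apply fI_pos; lra.
      apply Rmult_lt_0_compat; apply fI_pos; lra. }
    nra. }
  exact (strdecr F dF Hd Hn).
Qed.

Theorem corollary9 (nu c : R) (hnu : 0 < nu) (hc : 0 < c) :
  forall x y : R, x < y ->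
    (hermite_neg (nu + c) y) ^ 2 / (hermite_neg nu y * hermite_neg (nu + 2 * c) y)
    < (hermite_neg (nu + c) x) ^ 2 / (hermite_neg nu x * hermite_neg (nu + 2 * c) x).
Proof.
  intros x y Hxy.
  assert (G0 := Gamma_pos nu hnu). assert (G1 := Gamma_pos (nu+c) ltac:(lra)).
  assert (G2 := Gamma_pos (nu+2*c) ltac:(lra)).
  assert (E : forall z, (hermite_neg (nu + c) z) ^ 2 / (hermite_neg nu z * hermite_neg (nu + 2 * c) z)
     = (Gamma_fn nu * Gamma_fn (nu + 2*c) / (Gamma_fn (nu+c))^2) *
       (fI (nu+c) z ^ 2 / (fI nu z * fI (nu+2*c) z))).
  { intros z. rewrite !herm_eq.
    assert (P0 := fI_pos nu z hnu). assert (P1 := fI_pos (nu+c) z ltac:(lra)).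
    assert (P2 := fI_pos (nu+2*c) z ltac:(lra)).
    field. repeat split; lra. }
  rewrite !E.
  apply Rmult_lt_compat_l.
  - apply Rdiv_lt_0_compat. apply Rmult_lt_0_compat; auto. apply pow_lt; auto.
  - apply F_decr; auto.
Qed.
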